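(* Let $X$ be a real Banach space, $Y$ an injective real Banach space, and $\mathcal{D}$ a closed subspace of $F_Y(X)$. Then the quotient space $Lip_0(X,Y)/{}^{\diamondsuit}\mathcal{D}$ is linearly isometrically isomorphic to $L(\mathcal{D},Y)$, via $f+{}^{\diamondsuit}\mathcal{D}\mapsto(\gamma\mapsto\gamma(f))$.
   Context: $Lip_0(X,Y)$ is the Banach space of Lipschitz maps $f:X\to Y$ with $f(0)=0$ and norm $Lip(f)=\sup_{x\neq y}\|f(x)-f(y)\|/\|x-y\|$. For $x\in X$, $\delta_x^Y\in L(Lip_0(X,Y),Y)$ is evaluation $\delta_x^Y(f)=f(x)$. $F_Y(X)$ is the norm-closed linear span of $\{\delta_x^Y:x\in X\}$ in $L(Lip_0(X,Y),Y)$. For $\mathcal{D}\subset F_Y(X)$, ${}^{\diamondsuit}\mathcal{D}=\{f\in Lip_0(X,Y):\gamma(f)=0\ \forall\gamma\in\mathcal{D}\}$, a closed subspace. $Y$ injective means: every bounded linear operator from a closed subspace of a Banach space into $Y$ extends to a bounded linear operator on the whole space with the same norm. *)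

(* Defs.v *)
From HB Require Import structures.
From mathcomp Require Import all_boot all_order all_algebra.
From mathcomp Require Import all_classical all_reals all_analysis.
Set Implicit Arguments. Unset Strict Implicit. Unset Printing Implicit Defensive.
Import Order.TTheory GRing.Theory Num.Theory.
Import numFieldNormedType.Exports.
Local Open Scope classical_set_scope.
Local Open Scope ring_scope.

(* Real Banach spaces are modelled as [completeNormedModType R], R : realType. *)

Section Defs.
Variable R : realType.

(* Operator norm (in \bar R, value +oo if unbounded) of T : Z -> Y on the
   unit ball of a subset S of Z; sup of the empty set is taken to be 0. *)
Definition opnorm_on (Z Y : normedModType R) (S : set Z) (T : Z -> Y) : \bar R :=
  ereal_sup ([set 0%E] `|` [set ((`|T z|)%:E) | z in S `&` [set z | `|z| <= 1]]).

Definition linear_on (Z Y : normedModType R) (S : set Z) (T : Z -> Y) : Prop :=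
  forall (a : R) (z1 z2 : Z), S z1 -> S z2 -> T (a *: z1 + z2) = a *: T z1 + T z2.

Definition lin_subspace (Z : normedModType R) (S : set Z) : Prop :=
  S 0 /\ forall (a : R) (z1 z2 : Z), S z1 -> S z2 -> S (a *: z1 + z2).

Definition injective_space (Y : normedModType R) : Prop :=
  forall (Z : completeNormedModType R) (S : set Z),
    lin_subspace S -> closed S ->
    forall T : Z -> Y, linear_on S T -> (opnorm_on S T < +oo)%E ->
    exists U : Z -> Y, linear_on setT U /\ (forall z, S z -> U z = T z) /\
      opnorm_on setT U = opnorm_on S T.

Variables (X Y : normedModType R).

Definition lipc (f : X -> Y) : \bar R :=
  ereal_sup ([set 0%E] `|` [set z | exists x y : X, x != y /\
     z = ((`|f x - f y| / `|x - y|)%:E)]).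

Definition Lip0 : set (X -> Y) := [set f | f 0 = 0 /\ (lipc f < +oo)%E].

(* Elements of L(Lip_0(X,Y),Y) are represented as maps (X -> Y) -> Y; only
   their values on Lip0 matter. Operator norm w.r.t. the norm Lip: *)
Definition gnorm (g : (X -> Y) -> Y) : \bar R :=
  ereal_sup ([set 0%E] `|` [set ((`|g f|)%:E) | f in Lip0 `&` [set f | (lipc f <= 1)%E]]).

Definition in_LLip (g : (X -> Y) -> Y) : Prop :=
  (forall (a : R) f1 f2, Lip0 f1 -> Lip0 f2 ->
     g (fun x => a *: f1 x + f2 x) = a *: g f1 + g f2) /\ (gnorm g < +oo)%E.

Definition delta (x : X) : (X -> Y) -> Y := fun f => f x.

Definition delta_comb (s : seq (R * X)) : (X -> Y) -> Y :=
  fun f => \sum_(p <- s) p.1 *: delta p.2 f.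

Definition FY : set ((X -> Y) -> Y) :=
  [set g | in_LLip g /\ forall e : R, 0 < e ->
     exists s : seq (R * X), (gnorm (fun f => (g f - delta_comb s f)%R) <= e%:E)%E].

Definition closed_subspace_FY (D : set ((X -> Y) -> Y)) : Prop :=
  D `<=` FY /\ D (fun _ => 0) /\
  (forall (a : R) g1 g2, D g1 -> D g2 -> D (fun f => a *: g1 f + g2 f)) /\
  (forall g, FY g -> (forall e : R, 0 < e ->
      exists g', D g' /\ (gnorm (fun f => (g f - g' f)%R) <= e%:E)%E) -> D g).

Definition preannih (D : set ((X -> Y) -> Y)) : set (X -> Y) :=
  [set f | Lip0 f /\ forall g, D g -> g f = 0].

Definition qnorm (D : set ((X -> Y) -> Y)) (f : X -> Y) : \bar R :=
  ereal_inf [set lipc (fun x => f x - h x) | h in preannih D].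

Definition LDnorm (D : set ((X -> Y) -> Y)) (T : ((X -> Y) -> Y) -> Y) : \bar R :=
  ereal_sup ([set 0%E] `|` [set ((`|T g|)%:E) | g in D `&` [set g | (gnorm g <= 1)%E]]).

Definition in_LD (D : set ((X -> Y) -> Y)) (T : ((X -> Y) -> Y) -> Y) : Prop :=
  (forall (a : R) g1 g2, D g1 -> D g2 ->
     T (fun f => a *: g1 f + g2 f) = a *: T g1 + T g2) /\ (LDnorm D T < +oo)%E.

End Defs.

(* Main.v *)
Require Import Defs.
From HB Require Import structures.
From mathcomp Require Import all_boot all_order all_algebra.
From mathcomp Require Import all_classical all_reals all_analysis.
From mathcomp Require Import ring lra.
Require Import Defs.
Import Order.TTheory GRing.Theory Num.Theory.
Import numFieldNormedType.Exports.
Local Open Scope classical_set_scope.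
Local Open Scope ring_scope.
Set Implicit Arguments. Unset Strict Implicit. Unset Printing Implicit Defensive.

Section Basic.
Variables (R : realType) (X Y : normedModType R).

Definition lipb (f : X -> Y) (L : R) := forall x y, `|f x - f y| <= L * `|x - y|.

Lemma lipc_ge0 (f : X -> Y) : (0 <= lipc f)%E.
Proof. by apply: le_ereal_sup_tmp; exists 0%E => //; left. Qed.

Lemma lipc_le (f : X -> Y) (L : R) : 0 <= L -> (lipc f <= L%:E)%E <-> lipb f L.
Proof.
move=> L0; split.
- move=> H x y; have [->|xy] := eqVneq x y; first by rewrite !subrr !normr0 mulr0.
  have : ((`|f x - f y| / `|x - y|)%:E <= lipc f)%E.
    by apply: le_ereal_sup_tmp; exists ((`|f x - f y| / `|x - y|)%:E) => //; right; exists x, y.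
  by move=> /le_trans /(_ H); rewrite lee_fin ler_pdivrMr ?normr_gt0 ?subr_eq0.
- move=> H; apply: ge_ereal_sup => _ [->|[x [y [xy ->]]]]; first by rewrite lee_fin.
  by rewrite lee_fin ler_pdivrMr ?normr_gt0 ?subr_eq0.
Qed.

Definition lipL (f : X -> Y) : R := fine (lipc f).

Lemma Lip0E (f : X -> Y) : Lip0 f -> lipc f = (lipL f)%:E.
Proof.
move=> [_ fin]; rewrite /lipL fineK //; rewrite ge0_fin_numE //; exact: lipc_ge0.
Qed.

Lemma lipL_ge0 (f : X -> Y) : 0 <= lipL f.
Proof. by rewrite /lipL; apply: fine_ge0; exact: lipc_ge0. Qed.

Lemma Lip0_lipb (f : X -> Y) : Lip0 f -> lipb f (lipL f).
Proof. by move=> Lf; apply/lipc_le; [exact: lipL_ge0| rewrite (Lip0E Lf)]. Qed.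

Lemma Lip0I (f : X -> Y) (L : R) : 0 <= L -> f 0 = 0 -> lipb f L -> Lip0 f.
Proof.
move=> L0 f0 H; split => //; apply: (le_lt_trans (_ : _ <= L%:E)%E); last exact: ltry.
exact/lipc_le.
Qed.

Lemma lipb_lin (f1 f2 : X -> Y) (a L1 L2 : R) : lipb f1 L1 -> lipb f2 L2 ->
  lipb (fun x => a *: f1 x + f2 x) (`|a| * L1 + L2).
Proof.
move=> H1 H2 x y.
have -> : a *: f1 x + f2 x - (a *: f1 y + f2 y) = a *: (f1 x - f1 y) + (f2 x - f2 y).
  by rewrite scalerBr; rewrite addrACA opprD.
apply: (le_trans (ler_normD _ _)); rewrite mulrDl normrZ -mulrA.
by apply: lerD; [apply: ler_wpM2l => //| ].
Qed.

Lemma Lip0_lin (f1 f2 : X -> Y) (a : R) : Lip0 f1 -> Lip0 f2 ->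
  Lip0 (fun x => a *: f1 x + f2 x).
Proof.
move=> L1 L2; apply: (@Lip0I _ (`|a| * lipL f1 + lipL f2)).
- by apply: addr_ge0; [apply: mulr_ge0 => //; exact: lipL_ge0| exact: lipL_ge0].
- by rewrite L1.1 L2.1 scaler0 addr0.
- by apply: lipb_lin; exact: Lip0_lipb.
Qed.

Lemma Lip0_0 : Lip0 (fun _ : X => (0 : Y)).
Proof. by apply: (@Lip0I _ 0) => // x y; rewrite subrr normr0 mul0r. Qed.

Definition glin (g : (X -> Y) -> Y) := forall (a : R) f1 f2, Lip0 f1 -> Lip0 f2 ->
     g (fun x => a *: f1 x + f2 x) = a *: g f1 + g f2.

Lemma gnorm_ge0 (g : (X -> Y) -> Y) : (0 <= gnorm g)%E.
Proof. by apply: le_ereal_sup_tmp; exists 0%E => //; left. Qed.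

Lemma gnorm_ub (g : (X -> Y) -> Y) f : Lip0 f -> (lipc f <= 1)%E -> ((`|g f|)%:E <= gnorm g)%E.
Proof. by move=> Lf lf; apply: le_ereal_sup_tmp; exists (`|g f|%:E) => //; right; exists f. Qed.

Lemma gnorm_le (g : (X -> Y) -> Y) (M : R) : 0 <= M ->
  (gnorm g <= M%:E)%E <-> (forall f, Lip0 f -> (lipc f <= 1)%E -> `|g f| <= M).
Proof.
move=> M0; split.
- by move=> H f Lf lf; rewrite -lee_fin; apply: le_trans H; exact: gnorm_ub.
- move=> H; apply: ge_ereal_sup => _ [->|[f [Lf lf] <-]]; first by rewrite lee_fin.
  by rewrite lee_fin; apply: H.
Qed.

Lemma glin0 (g : (X -> Y) -> Y) : glin g -> g (fun _ => 0) = 0.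
Proof.
move=> gl; have := gl (-1) _ _ Lip0_0 Lip0_0.
have -> : (fun x : X => (-1 : R) *: (0 : Y) + 0) = (fun _ => 0) by apply: funext => x; rewrite scaler0 addr0.
by rewrite scaleN1r addNr.
Qed.

Lemma glinZ (g : (X -> Y) -> Y) a f : glin g -> Lip0 f -> g (fun x => a *: f x) = a *: g f.
Proof.
move=> gl Lf; have := gl a _ _ Lf Lip0_0; rewrite glin0 // addr0 => <-.
by congr g; apply: funext => x; rewrite addr0.
Qed.

Lemma lipb0 (f : X -> Y) : f 0 = 0 -> lipb f 0 -> f = fun _ => 0.
Proof.
move=> f0 H; apply: funext => x; have := H x 0; rewrite f0 subr0 mul0r.
by rewrite normr_le0 => /eqP.
Qed.

Lemma KB (g : (X -> Y) -> Y) (M L : R) f : glin g -> 0 <= M -> (gnorm g <= M%:E)%E ->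
  Lip0 f -> 0 <= L -> lipb f L -> `|g f| <= M * L.
Proof.
move=> gl M0 gM Lf L0 fL.
have [L0e|Lne] := eqVneq L 0.
  by move: fL; rewrite L0e => fL; rewrite (lipb0 Lf.1 fL) glin0 // normr0 mulr0.
have Lgt : 0 < L by rewrite lt0r Lne.
have Lf' : Lip0 (fun x => L^-1 *: f x).
  have := Lip0_lin (L^-1) Lf Lip0_0.
  by rewrite (_ : (fun x => L^-1 *: f x + 0) = (fun x => L^-1 *: f x)) //; apply: funext => x; rewrite addr0.
have lf' : (lipc (fun x => L^-1 *: f x) <= 1)%E.
  apply/lipc_le => // x y; rewrite -scalerBr normrZ ger0_norm ?invr_ge0 //.
  by rewrite mul1r mulrC ler_pdivrMr // mulrC fL.
have := (gnorm_le g M0).1 gM _ Lf' lf'.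
by rewrite glinZ // normrZ ger0_norm ?invr_ge0 // mulrC ler_pdivrMr.
Qed.

End Basic.

Section FYlin.
Variables (R : realType) (X Y : normedModType R).
Implicit Types (g : (X -> Y) -> Y) (f : X -> Y).

Lemma gnorm_lin g1 g2 (a M1 M2 : R) : 0 <= M1 -> 0 <= M2 ->
  (gnorm g1 <= M1%:E)%E -> (gnorm g2 <= M2%:E)%E ->
  (gnorm (fun f => (a *: g1 f + g2 f)%R) <= (`|a| * M1 + M2)%:E)%E.
Proof.
move=> M10 M20 h1 h2; apply/gnorm_le.
  by apply: addr_ge0 => //; apply: mulr_ge0.
move=> f Lf lf; apply: (le_trans (ler_normD _ _)); rewrite normrZ.
apply: lerD; last exact: (gnorm_le g2 M20).1 h2 f Lf lf.
by apply: ler_wpM2l => //; exact: (gnorm_le g1 M10).1 h1 f Lf lf.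
Qed.

Definition gN g : R := fine (gnorm g).

Lemma gN_ge0 g : 0 <= gN g.
Proof. by apply: fine_ge0; exact: gnorm_ge0. Qed.

Lemma gnormE g : (gnorm g < +oo)%E -> gnorm g = (gN g)%:E.
Proof. by move=> h; rewrite /gN fineK // ge0_fin_numE //; exact: gnorm_ge0. Qed.

Lemma in_LLip_lin g1 g2 a : in_LLip g1 -> in_LLip g2 ->
  in_LLip (fun f => a *: g1 f + g2 f).
Proof.
move=> [l1 n1] [l2 n2]; split.
  move=> b f1 f2 L1 L2; rewrite l1 // l2 //.
  by rewrite !scalerDr !scalerA [b * a]mulrC addrACA.
apply: (le_lt_trans (gnorm_lin a (gN_ge0 g1) (gN_ge0 g2) _ _)); last exact: ltry.
  by rewrite gnormE.
by rewrite gnormE.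
Qed.

Lemma delta_comb_cat (a : R) (s1 s2 : seq (R * X)) f :
  delta_comb (map (fun p => (a * p.1, p.2)) s1 ++ s2) f =
  a *: delta_comb s1 f + delta_comb s2 f.
Proof.
rewrite /delta_comb big_cat big_map scaler_sumr; congr (_ + _).
by apply: eq_bigr => p _ /=; rewrite scalerA.
Qed.

Lemma FY_lin g1 g2 a : FY g1 -> FY g2 -> FY (fun f => a *: g1 f + g2 f).
Proof.
move=> [i1 a1] [i2 a2]; split; first exact: in_LLip_lin.
move=> e e0.
have e10 : 0 < e / (2 * (`|a| + 1)) by apply: divr_gt0 => //; apply: mulr_gt0 => //; apply: ltr_pwDr.
have e20 : 0 < e / 2 by apply: divr_gt0.
have [s1 h1] := a1 _ e10; have [s2 h2] := a2 _ e20.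
exists (map (fun p => (a * p.1, p.2)) s1 ++ s2).
have -> : (fun f => a *: g1 f + g2 f - delta_comb (map (fun p => (a * p.1, p.2)) s1 ++ s2) f)
  = (fun f => a *: (g1 f - delta_comb s1 f) + (g2 f - delta_comb s2 f)).
  by apply: funext => f; rewrite delta_comb_cat scalerBr opprD addrACA.
apply: (le_trans (gnorm_lin a (ltW e10) (ltW e20) h1 h2)); rewrite lee_fin.
have -> : `|a| * (e / (2 * (`|a| + 1))) = e / 2 * (`|a| / (`|a| + 1)).
  by field; rewrite gt_eqF // ltr_pwDr.
rewrite [X in _ <= X](splitr e) lerD2r ler_piMr ?(ltW e20) //.
by rewrite ler_pdivrMr ?mul1r ?lerDl // ltr_pwDr.
Qed.

Lemma FY0 : FY (fun _ : X -> Y => 0 : Y).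
Proof.
split.
  split; first by move=> a f1 f2 _ _; rewrite scaler0 addr0.
  apply: (le_lt_trans (_ : _ <= 0%:E)%E); last exact: ltry.
  by apply/gnorm_le => // f _ _; rewrite normr0.
move=> e e0; exists [::]; apply/gnorm_le; first exact: ltW.
by move=> f _ _; rewrite /delta_comb big_nil subrr normr0 ltW.
Qed.

End FYlin.

Section Zdef.
Variables (R : realType) (X Y : normedModType R).

Definition PzP (g : (X -> Y) -> Y) : Prop := FY g /\ forall f, ~ Lip0 f -> g f = 0.
Definition Pz : {pred (X -> Y) -> Y} := fun g => `[< PzP g >].

Lemma Pz_submod : GRing.submod_closed Pz.
Proof.
split.
  apply/asboolP; split; first exact: FY0.
  by [].
move=> a u v /asboolP [Fu u0] /asboolP [Fv v0]; apply/asboolP; split.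
  exact: FY_lin.
by move=> f nf; change (a *: u f + v f = 0); rewrite u0 // v0 // scaler0 addr0.
Qed.

HB.instance Definition _ := GRing.isSubmodClosed.Build R _ Pz Pz_submod.

Record Z := MkZ { zval : (X -> Y) -> Y; zP : zval \in Pz }.

HB.instance Definition _ := [isSub for zval].
HB.instance Definition _ := [Choice of Z by <:].
HB.instance Definition _ := [SubChoice_isSubLmodule of Z by <:].

Lemma zvalD (z1 z2 : Z) f : zval (z1 + z2) f = zval z1 f + zval z2 f.
Proof. by []. Qed.
Lemma zvalZ a (z : Z) f : zval (a *: z) f = a *: zval z f.
Proof. by []. Qed.
Lemma zvalN (z : Z) f : zval (- z) f = - zval z f.
Proof. by []. Qed.
Lemma zval0 f : zval (0 : Z) f = 0.
Proof. by []. Qed.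


Lemma zPP (z : Z) : PzP (zval z).
Proof. exact/asboolP/(zP z). Qed.

Lemma zFY (z : Z) : FY (zval z).
Proof. exact: (zPP z).1. Qed.

Lemma zlin (z : Z) : glin (zval z).
Proof. exact: (zFY z).1.1. Qed.

Lemma zout (z : Z) f : ~ Lip0 f -> zval z f = 0.
Proof. exact: (zPP z).2. Qed.

Definition znorm (z : Z) : R := gN (zval z).

Lemma gnormZE (z : Z) : gnorm (zval z) = (znorm z)%:E.
Proof. by rewrite gnormE //; exact: (zFY z).1.2. Qed.

Lemma znorm_ge0 (z : Z) : 0 <= znorm z.
Proof. exact: gN_ge0. Qed.

Lemma zval_lin a (z1 z2 : Z) : zval (a *: z1 + z2) = (fun f => a *: zval z1 f + zval z2 f).
Proof. by []. Qed.

Lemma znorm_lin a (z1 z2 : Z) : znorm (a *: z1 + z2) <= `|a| * znorm z1 + znorm z2.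
Proof.
rewrite -lee_fin -gnormZE zval_lin; apply: gnorm_lin; try exact: znorm_ge0.
  by rewrite gnormZE.
by rewrite gnormZE.
Qed.

Lemma znormD (z1 z2 : Z) : znorm (z1 + z2) <= znorm z1 + znorm z2.
Proof. by have := znorm_lin 1 z1 z2; rewrite scale1r normr1 mul1r. Qed.

Lemma znorm0 : znorm 0 = 0.
Proof.
apply/eqP; rewrite eq_le znorm_ge0 andbT -lee_fin -gnormZE.
by apply/gnorm_le => // f _ _; rewrite zval0 normr0.
Qed.

Lemma znormZle a (z : Z) : znorm (a *: z) <= `|a| * znorm z.
Proof. by have := znorm_lin a z 0; rewrite addr0 znorm0 addr0. Qed.

Lemma znormZ a (z : Z) : znorm (a *: z) = `|a| * znorm z.
Proof.
apply/eqP; rewrite eq_le znormZle /=.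
have [->|a0] := eqVneq a 0; first by rewrite normr0 mul0r znorm_ge0.
have := znormZle a^-1 (a *: z); rewrite scalerA mulVf // scale1r normfV.
by rewrite ler_pdivlMl ?normr_gt0.
Qed.

Lemma znorm_eq0 (z : Z) : znorm z = 0 -> z = 0.
Proof.
move=> z0; apply: val_inj; apply: funext => f /=.
have [Lf|nLf] := pselect (Lip0 f); last by rewrite zout.
apply/eqP; rewrite -normr_le0.
have := KB (zlin z) (le_refl 0) _ Lf (lipL_ge0 f) (Lip0_lipb Lf).
by rewrite mul0r; apply; rewrite gnormZE z0.
Qed.

HB.instance Definition _ := Lmodule_isNormed.Build R Z znormD znormZ znorm_eq0.

Lemma normZE (z : Z) : `|z| = znorm z.
Proof. by []. Qed.

End Zdef.

Section Zcomplete.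
Variables (R : realType) (X : normedModType R) (Y : completeNormedModType R).
Local Notation ZZ := (@Z R X Y).

Definition rr (n : nat) : R := n.+1%:R^-1.

Lemma rr_gt0 n : 0 < rr n.
Proof. by rewrite /rr invr_gt0 ltr0Sn. Qed.

Lemma rr_le n m : (n <= m)%N -> rr m <= rr n.
Proof. by move=> nm; rewrite /rr lef_pV2 ?posrE ?ltr0Sn // ler_nat ltnS. Qed.

Lemma near_rr (e : R) : 0 < e -> exists N, forall n, (N <= n)%N -> rr n < e.
Proof.
move=> e0; have [N _ HN] := near_infty_natSinv_lt (PosNum e0).
by exists N => n Nn; apply: HN.
Qed.

Lemma lim_bound (u : nat -> Y) l c b : u @ \oo --> l ->
  (\forall m \near \oo, `|c - u m| <= b) -> `|c - l| <= b.
Proof.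
move=> ul ev.
have vl : (fun m => `|c - u m|) @ \oo --> `|c - l|.
  apply: cvg_norm; apply: cvgB => //; exact: cvg_cst.
exact: (closed_cvg [set x : R | x <= b] (@closed_le _ b) ev _ vl).
Qed.

Lemma zval_sub (z1 z2 : ZZ) f : zval (z1 - z2) f = zval z1 f - zval z2 f.
Proof. by []. Qed.

Lemma zdiff (z1 z2 : ZZ) f : Lip0 f ->
  `|zval z1 f - zval z2 f| <= `|z1 - z2| * lipL f.
Proof.
move=> Lf; rewrite -zval_sub; apply: KB (zlin _) (znorm_ge0 _) _ Lf (lipL_ge0 f) (Lip0_lipb Lf).
by rewrite gnormZE.
Qed.

Lemma Z_complete (F : set_system ZZ) : ProperFilter F -> cauchy F -> cvg F.
Proof.
move=> PF Fc0; have Fc : cauchy_ex F by apply/cauchyP.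
have [zs Hzs] : {zs : nat -> ZZ & forall n, F (ball (zs n) (rr n))}.
  exact: (choice (fun n => Fc _ (rr_gt0 n))).
have dz n m : `|zs n - zs m| < rr n + rr m.
  have [w [w1 w2]] := filter_ex (filterI (Hzs n) (Hzs m)).
  move: w1 w2; rewrite -!ball_normE /ball_ => w1 w2.
  have -> : zs n - zs m = (zs n - w) + (w - zs m) by rewrite addrA subrK.
  apply: (le_lt_trans (ler_normD _ _)); rewrite (distrC w); exact: ltrD.
have dz2 n m : (n <= m)%N -> `|zs n - zs m| <= 2 * rr n.
  move=> nm; apply: ltW; apply: (lt_le_trans (dz n m)).
  by rewrite -[2]/(1 + 1) mulrDl mul1r lerD2l rr_le.
pose u f n := zval (zs n) f.
have ucvg f : cvg (u f @ \oo).
  have [Lf|nLf] := pselect (Lip0 f); last first.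
    have -> : u f = (fun _ => 0) by apply: funext => n; rewrite /u zout.
    apply: cvgP; exact: cvg_cst.
  apply: cauchy_cvg; apply: cauchy_exP => e e0.
  have e'0 : 0 < e / (2 * (lipL f + 1)).
    by apply: divr_gt0 => //; apply: mulr_gt0 => //; apply: ltr_wpDl => //; exact: lipL_ge0.
  have [N HN] := near_rr e'0.
  exists (u f N); exists N => // m /= Nm; rewrite -ball_normE /ball_ /=.
  apply: (le_lt_trans (zdiff _ _ Lf)); apply: (le_lt_trans (ler_wpM2r (lipL_ge0 f) (dz2 _ _ Nm))).
  have := HN N (leqnn N); rewrite ltr_pdivlMr; last first.
    by apply: mulr_gt0 => //; apply: ltr_wpDl => //; exact: lipL_ge0.
  move=> H; apply: le_lt_trans H; have := rr_gt0 N; have := lipL_ge0 f; nra.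
pose h f := lim (u f @ \oo).
have hcvg f : u f @ \oo --> h f by exact: ucvg.
have hb n f : Lip0 f -> `|zval (zs n) f - h f| <= 2 * rr n * lipL f.
  move=> Lf; apply: (lim_bound (hcvg f)); exists n => // m /= nm.
  apply: (le_trans (zdiff _ _ Lf)); apply: ler_wpM2r; first exact: lipL_ge0.
  exact: dz2.
have hout f : ~ Lip0 f -> h f = 0.
  move=> nLf; rewrite /h (_ : u f = (fun _ => 0)); first exact: lim_cst.
  by apply: funext => n; rewrite /u zout.
have hlin : glin h.
  move=> a f1 f2 L1 L2; rewrite /h.
  have -> : u (fun x => a *: f1 x + f2 x) = (fun n => a *: u f1 n + u f2 n).
    by apply: funext => n; rewrite /u (zlin (zs n)).
  apply: cvg_lim => //; apply: cvgD => //; apply: cvgZr; exact: hcvg.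
have hgn n : (gnorm (fun f => (h f - zval (zs n) f)%R) <= (2 * rr n)%:E)%E.
  apply/gnorm_le; first by apply: mulr_ge0 => //; exact: ltW (rr_gt0 n).
  move=> f Lf lf; rewrite distrC; apply: (le_trans (hb n f Lf)).
  rewrite ler_piMr //; first by apply: mulr_ge0 => //; exact: ltW (rr_gt0 n).
  by rewrite -lee_fin -(Lip0E Lf).
have hdec n g : (fun f => h f - g f) = (fun f => 1 *: (h f - zval (zs n) f) + (zval (zs n) f - g f)).
  by apply: funext => f; rewrite scale1r addrA subrK.
have hFY : FY h.
  split.
    split => //.
    have -> : h = (fun f => 1 *: (h f - zval (zs 0%N) f) + zval (zs 0%N) f).
      by apply: funext => f; rewrite scale1r subrK.
    apply: (le_lt_trans (gnorm_lin 1 _ (znorm_ge0 (zs 0%N)) (hgn 0%N) _)); last exact: ltry.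
      by apply: mulr_ge0 => //; exact: ltW (rr_gt0 _).
    by rewrite gnormZE.
  move=> e e0.
  have e40 : 0 < e / 4 by apply: divr_gt0.
  have [N HN] := near_rr e40.
  have e20 : 0 < e / 2 by apply: divr_gt0.
  have [s Hs] := (zFY (zs N)).2 _ e20.
  exists s; rewrite (hdec N).
  apply: (le_trans (gnorm_lin 1 _ (ltW e20) (hgn N) Hs)).
    by apply: mulr_ge0 => //; exact: ltW (rr_gt0 _).
  rewrite lee_fin normr1 mul1r; have := HN N (leqnn N); lra.
have hP : h \in @Pz R X Y by apply/asboolP; split.
pose hz : ZZ := MkZ hP.
apply: (@cvgP _ _ hz); apply/cvg_ballP => e e0.
have e30 : 0 < e / 3 by apply: divr_gt0.
have [N HN] := near_rr e30.
apply: filterS (Hzs N) => w; rewrite -!ball_normE /ball_ /= => Nw.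
have hN : `|hz - zs N| <= 2 * rr N.
  by rewrite -lee_fin normZE -gnormZE; exact: hgn.
have -> : hz - w = (hz - zs N) + (zs N - w) by rewrite addrA subrK.
apply: (le_lt_trans (ler_normD _ _)); have := HN N (leqnn N); lra.
Qed.

End Zcomplete.

HB.instance Definition _ (R : realType) (X : normedModType R) (Y : completeNormedModType R) :=
  Uniform_isComplete.Build (@Z R X Y) (@Z_complete R X Y).


Section Ext1.
Variables (R : realType) (X Y : normedModType R).
Implicit Types (g : (X -> Y) -> Y) (f : X -> Y).
Local Notation ZZ := (@Z R X Y).

Lemma gnorm_eqL g1 g2 : (forall f, Lip0 f -> g1 f = g2 f) -> gnorm g1 = gnorm g2.
Proof.
move=> H; rewrite /gnorm; congr ereal_sup; congr (_ `|` _).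
by apply/seteqP; split => _ [f [Lf lf] <-]; exists f => //; rewrite H.
Qed.

Lemma FY_eqL g1 g2 : FY g1 -> (forall f, Lip0 f -> g1 f = g2 f) -> FY g2.
Proof.
move=> [[l1 n1] a1] H; split; first split.
- move=> a f1 f2 L1 L2; rewrite -!H ?l1 //; exact: Lip0_lin.
- by rewrite -(gnorm_eqL H).
- move=> e e0; have [s Hs] := a1 e e0; exists s.
  by rewrite -(@gnorm_eqL (fun f => g1 f - delta_comb s f)) // => f Lf; rewrite H.
Qed.

Definition rs g : (X -> Y) -> Y := fun f => if `[< Lip0 f >] then g f else 0.

Lemma rs_in g f : Lip0 f -> rs g f = g f.
Proof. by move=> Lf; rewrite /rs asboolT. Qed.

Lemma rs_out g f : ~ Lip0 f -> rs g f = 0.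
Proof. by move=> Lf; rewrite /rs asboolF. Qed.

Lemma rs_Pz g : FY g -> rs g \in @Pz R X Y.
Proof.
move=> Fg; apply/asboolP; split; first by apply: (FY_eqL Fg) => f Lf; rewrite rs_in.
exact: rs_out.
Qed.

Lemma delta_FY (x : X) : FY (@delta R X Y x).
Proof.
split; first split.
- by [].
- apply: (@le_lt_trans _ _ (`|x|)%:E); last exact: ltry.
  apply/gnorm_le => // f Lf lf; have := (lipc_le f ler01).1 lf x 0.
  by rewrite /delta Lf.1 !subr0 mul1r.
- move=> e e0; exists [:: (1, x)]; apply/gnorm_le; first exact: ltW.
  by move=> f _ _; rewrite /delta_comb big_cons big_nil addr0 scale1r /delta subrr normr0 ltW.
Qed.

Definition dz (x : X) : ZZ := MkZ (rs_Pz (delta_FY x)).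

Lemma dzE x f : Lip0 f -> zval (dz x) f = f x.
Proof. by move=> Lf; rewrite /= rs_in. Qed.

Lemma dz0 : dz 0 = 0.
Proof.
apply: val_inj; apply: funext => f /=.
have [Lf|nLf] := pselect (Lip0 f); last by rewrite rs_out.
by rewrite rs_in // /delta Lf.1.
Qed.

Lemma zvalB (z1 z2 : ZZ) f : zval (z1 - z2) f = zval z1 f - zval z2 f.
Proof. by []. Qed.

Lemma dz_sub x y : `|dz x - dz y| <= `|x - y|.
Proof.
rewrite -lee_fin normZE -gnormZE; apply/gnorm_le => // f Lf lf.
rewrite zvalB !dzE //; have := (lipc_le f ler01).1 lf x y; by rewrite mul1r.
Qed.

Fixpoint zdc (s : seq (R * X)) : ZZ :=
  if s is p :: s' then p.1 *: dz p.2 + zdc s' else 0.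

Lemma zdcE s f : Lip0 f -> zval (zdc s) f = delta_comb s f.
Proof.
move=> Lf; elim: s => [|p s IH] /=; first by rewrite /delta_comb big_nil.
change (p.1 *: zval (dz p.2) f + zval (zdc s) f = delta_comb (p :: s) f).
by rewrite IH dzE // /delta_comb big_cons.
Qed.

End Ext1.

Lemma small_le0 (R : realType) (x c : R) : 0 <= c -> (forall e, 0 < e -> x <= c * e) -> x <= 0.
Proof.
move=> c0 H; rewrite leNgt; apply/negP => x0.
have c1 : 0 < c + 1 by lra.
have := H (x / (c + 1)) (divr_gt0 x0 c1).
rewrite mulrA ler_pdivlMr //; nra.
Qed.

Section Ext2.
Variables (R : realType) (X : normedModType R) (Y : completeNormedModType R).
Local Notation ZZ := (@Z R X Y).

Lemma EXT (D : set ((X -> Y) -> Y)) (T : ((X -> Y) -> Y) -> Y) :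
  injective_space Y -> closed_subspace_FY D -> in_LD D T ->
  exists f', Lip0 f' /\ (lipc f' <= LDnorm D T)%E /\ forall g, D g -> T g = g f'.
Proof.
move=> injY [DF [D0 [Dlin Dcl]]] [Tlin Tfin].
have LD0 : (0 <= LDnorm D T)%E by apply: le_ereal_sup_tmp; exists 0%E => //; left.
pose N := fine (LDnorm D T).
have LDE : LDnorm D T = N%:E by rewrite /N fineK // ge0_fin_numE.
have N0 : 0 <= N by rewrite -lee_fin -LDE.
have Tb g : D g -> (gnorm g <= 1)%E -> `|T g| <= N.
  move=> Dg gn; rewrite -lee_fin -LDE; apply: le_ereal_sup_tmp.
  by exists (`|T g|%:E) => //; right; exists g.
pose S : set ZZ := [set z | D (zval z)].
have Slin : lin_subspace S.
  split; first exact: D0.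
  move=> a z1 z2 h1 h2; exact: Dlin.
have Scl : closed S.
  move=> z Cz; apply: Dcl; first exact: zFY.
  move=> e e0; have [w [Sw zw]] := Cz _ (nbhsx_ballx z e e0).
  exists (zval w); split => //.
  move: zw; rewrite -ball_normE /ball_ /= => zw.
  have -> : gnorm (fun f => (zval z f - zval w f)%R) = (`|z - w|)%:E by rewrite normZE -gnormZE.
  by rewrite lee_fin ltW.
pose T' : ZZ -> Y := fun z => T (zval z).
have T'lin : linear_on S T' by move=> a z1 z2 h1 h2; exact: Tlin.
have T'n : (opnorm_on S T' <= N%:E)%E.
  apply: ge_ereal_sup => _ [->|[z [Sz zn] <-]]; first by rewrite lee_fin.
  rewrite lee_fin; apply: Tb => //; rewrite gnormZE lee_fin; exact: zn.
have [U [Ulin [UT Un]]] := injY ZZ S Slin Scl T' T'lin (le_lt_trans T'n (ltry _)).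
have Ulin2 a z1 z2 : U (a *: z1 + z2) = a *: U z1 + U z2 by exact: Ulin.
have U0 : U 0 = 0.
  have h := Ulin2 1 0 0; rewrite scale1r addr0 scale1r in h.
  by apply: (addrI (U 0)); rewrite addr0 -h.
have UB z : `|U z| <= N * `|z|.
  have opU : (opnorm_on setT U <= N%:E)%E by rewrite Un.
  have Ub1 w : `|w| <= 1 -> `|U w| <= N.
    move=> w1; rewrite -lee_fin; apply: le_trans opU; apply: le_ereal_sup_tmp.
    by exists (`|U w|%:E) => //; right; exists w.
  have [->|z0] := eqVneq z 0; first by rewrite U0 !normr0 mulr0.
  have zg : 0 < `|z| by rewrite normr_gt0.
  have h1 : `| `|z|^-1 *: z| <= 1 by rewrite normfZV.
  have := Ub1 _ h1.
  have -> : U (`|z|^-1 *: z) = `|z|^-1 *: U z by rewrite -[_ *: z]addr0 Ulin2 U0 addr0.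
  by rewrite normrZ ger0_norm ?invr_ge0 ?(ltW zg) // mulrC ler_pdivrMr // mulrC.
pose f' x := U (@dz R X Y x).
have UB' z1 z2 : U z1 - U z2 = U (z1 - z2).
  by rewrite -scaleN1r addrC -Ulin2 scaleN1r addrC.
have f'lip : lipb f' N.
  move=> x y; rewrite /f' UB'; apply: le_trans (UB _) _.
  have := @dz_sub R X Y x y; move=> H; by apply: ler_wpM2l.
have f'0 : f' 0 = 0 by rewrite /f' (@dz0 R X Y) U0.
have Lf' : Lip0 f' := Lip0I N0 f'0 f'lip.
have lf' : (lipc f' <= N%:E)%E := (lipc_le f' N0).2 f'lip.
have lLf' : lipL f' <= N by rewrite -lee_fin -(Lip0E Lf').
have Uzdc s : U (@zdc R X Y s) = delta_comb s f'.
  elim: s => [|p s IH] /=; first by rewrite U0 /delta_comb big_nil.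
  by rewrite Ulin2 IH /delta_comb big_cons.
have Uz z : U z = zval z f'.
  apply/eqP; rewrite -subr_eq0 -normr_le0; apply: (@small_le0 _ _ (2 * N)) => [|e e0].
    by apply: mulr_ge0.
  have [s Hs] := (zFY z).2 e e0.
  have zs : `|z - @zdc R X Y s| <= e.
    rewrite -lee_fin normZE -gnormZE; apply: le_trans Hs; rewrite le_eqVlt; apply/orP; left; apply/eqP.
    by apply: gnorm_eqL => f Lf; rewrite zvalB zdcE.
  have e1 : `|U z - U (@zdc R X Y s)| <= N * e.
    by rewrite UB'; apply: le_trans (UB _) _; apply: ler_wpM2l.
  have e2 : `|zval (@zdc R X Y s) f' - zval z f'| <= e * N.
    apply: le_trans (zdiff _ _ Lf') _; rewrite distrC.
    by apply: ler_pM => //; [exact: lipL_ge0].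
  have -> : U z - zval z f' = (U z - U (@zdc R X Y s)) + (zval (@zdc R X Y s) f' - zval z f').
    by rewrite Uzdc -(zdcE s Lf') addrA subrK.
  apply: le_trans (ler_normD _ _) _; lra.
have T0 : T (fun _ => 0) = 0.
  transitivity (T (fun f => (-1) *: (fun _ : X -> Y => (0:Y)) f + (fun _ : X -> Y => (0:Y)) f)).
    by congr T; apply: funext => f; rewrite scaler0 addr0.
  by rewrite (Tlin (-1) _ _ D0 D0) scaleN1r addNr.
have Tnull k : D k -> (gnorm k <= 0%:E)%E -> T k = 0.
  move=> Dk k0; apply/eqP; apply: contraT => Tk.
  have Tkg : 0 < `|T k| by rewrite normr_gt0.
  pose c := (N + 1) / `|T k|.
  have := Tb _ (Dlin c _ _ Dk D0) _.
  rewrite Tlin // T0 addr0 normrZ.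
  have -> : `|c| * `|T k| = N + 1.
    by rewrite ger0_norm /c ?divr_ge0 ?addr_ge0 // mulfVK // gt_eqF.
  have : (gnorm (fun f => (c *: k f + 0)%R) <= 1%:E)%E.
    apply: le_trans (gnorm_lin c (le_refl 0) (le_refl 0) k0 _) _.
      by apply/gnorm_le => // f _ _; rewrite normr0.
    by rewrite mulr0 addr0 lee_fin.
  move=> H /(_ H); lra.
exists f'; split => //; split; first by rewrite LDE.
move=> g Dg; have Fg := DF g Dg.
pose zg : ZZ := MkZ (rs_Pz Fg).
have Dzg : D (rs g).
  apply: Dcl; first by apply: (FY_eqL Fg) => f Lf; rewrite rs_in.
  move=> e e0; exists g; split => //.
  rewrite (@gnorm_eqL _ _ _ _ (fun _ => 0)); last by move=> f Lf; rewrite rs_in // subrr.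
  by apply/gnorm_le; [exact: ltW| move=> f _ _; rewrite normr0 ltW].
have Tg : T g = T (rs g).
  have Dk := Dlin (-1) _ _ Dzg Dg.
  have := Tnull _ Dk.
  rewrite Tlin // scaleN1r => H; apply/eqP; rewrite -subr_eq0 addrC; apply/eqP; apply: H.
  rewrite (@gnorm_eqL _ _ _ _ (fun _ => 0)); last by move=> f Lf; rewrite rs_in // scaleN1r addNr.
  by apply/gnorm_le => // f _ _; rewrite normr0.
rewrite Tg -(rs_in g Lf').
have -> : T (rs g) = T' zg by [].
by rewrite -UT // Uz.
Qed.

End Ext2.

Lemma subfE (R : realType) (X Y : normedModType R) (f1 f2 : X -> Y) :
  (fun x => f1 x - f2 x) = (fun x => (-1) *: f2 x + f1 x).
Proof. by apply: funext => x; rewrite scaleN1r addrC. Qed.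

Lemma Lip0B (R : realType) (X Y : normedModType R) (f1 f2 : X -> Y) :
  Lip0 f1 -> Lip0 f2 -> Lip0 (fun x => f1 x - f2 x).
Proof. by move=> L1 L2; rewrite subfE; apply: Lip0_lin. Qed.

Lemma glinB (R : realType) (X Y : normedModType R) (g : (X -> Y) -> Y) (f1 f2 : X -> Y) :
  glin g -> Lip0 f1 -> Lip0 f2 -> g (fun x => f1 x - f2 x) = g f1 - g f2.
Proof. by move=> gl L1 L2; rewrite subfE gl // scaleN1r addrC. Qed.

Theorem mainTheorem13 (R : realType) (X Y : completeNormedModType R)
  (D : set ((X -> Y) -> Y)) :
  injective_space Y -> closed_subspace_FY D ->
  (* the map Phi : f |-> (gamma |-> gamma f) is well defined on the quotient,
     injective on it, and linear *)
  (forall f1 f2 : X -> Y, Lip0 f1 -> Lip0 f2 ->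
     ((forall g, D g -> g f1 = g f2) <-> preannih D (fun x => f1 x - f2 x))) /\
  (forall (a : R) (f1 f2 : X -> Y), Lip0 f1 -> Lip0 f2 -> forall g, D g ->
     g (fun x => a *: f1 x + f2 x) = a *: g f1 + g f2) /\
  (* Phi(f) lies in L(D,Y) and is isometric for the quotient norm *)
  (forall f : X -> Y, Lip0 f ->
     in_LD D (fun g => g f) /\ LDnorm D (fun g => g f) = qnorm D f) /\
  (* Phi is onto L(D,Y) *)
  (forall T : ((X -> Y) -> Y) -> Y, in_LD D T ->
     exists f : X -> Y, Lip0 f /\ forall g, D g -> T g = g f).
Proof.
move=> injY Dsub; have [DF [D0 [Dlin Dcl]]] := Dsub.
have glinD g : D g -> glin g by move=> Dg; exact: (DF g Dg).1.1.
split.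
  move=> f1 f2 L1 L2; split.
    move=> H; split; first exact: Lip0B.
    move=> g Dg; rewrite glinB; [ |exact: glinD|by []|by []]; by rewrite (H g Dg) subrr.
  move=> [_ H] g Dg; apply/eqP; rewrite -subr_eq0 -(glinB (glinD g Dg) L1 L2); apply/eqP; exact: H.
split; first by move=> a f1 f2 L1 L2 g Dg; exact: glinD.
split; last first.
  move=> T HT; have [f' [Lf' [_ H]]] := EXT injY Dsub HT; by exists f'.
move=> f Lf.
have hin : in_LD D (fun g => g f).
  split; first by [].
  apply: (@le_lt_trans _ _ (lipL f)%:E); last exact: ltry.
  apply: ge_ereal_sup => _ [->|[g [Dg gn] <-]]; first by rewrite lee_fin lipL_ge0.
  rewrite lee_fin; have := KB (glinD g Dg) ler01 gn Lf (lipL_ge0 f) (Lip0_lipb Lf).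
  by rewrite mul1r.
split => //.
apply/eqP; rewrite eq_le; apply/andP; split.
- apply: le_ereal_inf_tmp => _ [h [Lh Hh] <-].
  have Lfh := Lip0B Lf Lh.
  apply: ge_ereal_sup => _ [->|[g [Dg gn] <-]]; first exact: lipc_ge0.
  have -> : g f = g (fun x => f x - h x) by rewrite (glinB (glinD g Dg) Lf Lh) (Hh g Dg) subr0.
  rewrite (Lip0E Lfh) lee_fin.
  have := KB (glinD g Dg) ler01 gn Lfh (lipL_ge0 _) (Lip0_lipb Lfh).
  by rewrite mul1r.
- have [f' [Lf' [lf' H]]] := EXT injY Dsub hin.
  apply: ge_ereal_inf; exists (lipc f'); last exact: lf'.
  exists (fun x => f x - f' x).
    split; first exact: Lip0B.
    by move=> g Dg; rewrite (glinB (glinD g Dg) Lf Lf') -(H g Dg) subrr.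
  by congr lipc; apply: funext => x; rewrite opprB addrCA subrr addr0.
Qed.
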